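(* Let $\Gamma\curvearrowright X, I$ be a dynamical ideal with permutation model $W[[X]]$. (1) If the dynamical ideal has cofinal orbits, then $W[[X]]$ satisfies the axiom of well-ordered choice. (2) If $I$ is definably closed and $W[[X]]$ satisfies the axiom of well-ordered choice, then the dynamical ideal has cofinal orbits.
   Context: Work in ZFC. $V[[X]]$ is the well-founded model of ZFCA with set of atoms exactly $X$ in which every set of elements is represented by an element. A group action of $\Gamma$ on $X$ extends to $V[[X]]$ by $\gamma\cdot A=\{\gamma\cdot B:B\in A\}$. $\mathrm{stab}(A)=\{\gamma:\gamma\cdot A=A\}$, $\mathrm{pstab}(a)=\{\gamma:\gamma\cdot B=B\ \forall B\in a\}$. A dynamical ideal $\Gamma\curvearrowright X, I$: a group $\Gamma$ acting on $X$ and a $\Gamma$-invariant ideal $I$ on $X$ containing all singletons. Its permutation model $W[[X]]$ is the class of $A\in V[[X]]$ such that $A$ and every element of its transitive closure are symmetric, where $A$ is symmetric if $\mathrm{pstab}(b)\subseteq\mathrm{stab}(A)$ for some $b\in I$. The axiom of well-ordered choice: every well-orderable family of nonempty sets has a choice function. For $a,b\in I$, $b$ is $a$-large if for every $c\in I$ there is $\gamma\in\mathrm{pstab}(a)$ with $c\subseteq\gamma\cdot b$. The dynamical ideal has cofinal orbits if for every $a\in I$ there is an $a$-large $b\in I$. A set $a\subseteq X$ is definably closed if for every $x\in X\setminus a$ there is $\gamma\in\mathrm{pstab}(a)$ with $\gamma\cdot x\neq x$; the dynamical ideal is definably closed if every set in $I$ is a subset of a definably closed set in $I$. *)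

(* Defs.v *)
(* Model of V[[X]] (well-founded sets with atoms X) as
   Aczel-style trees with atoms, with extensional (bisimulation) equality. *)

Inductive U (X : Type) : Type :=
| Atom : X -> U X
| Node : forall I : Type, (I -> U X) -> U X.
Arguments Atom {X} _.
Arguments Node {X} I _.

Fixpoint ueq {X : Type} (A B : U X) {struct A} : Prop :=
  match A with
  | Atom x => match B with Atom y => x = y | Node _ _ => False end
  | Node K f =>
      match B with
      | Atom _ => False
      | Node J g =>
          (forall i, exists j, ueq (f i) (g j)) /\
          (forall j, exists i, ueq (f i) (g j))
      end
  end.

Definition umem {X : Type} (a A : U X) : Prop :=
  match A with
  | Atom _ => False
  | Node K f => exists i, ueq a (f i)
  end.

Definition upair {X : Type} (a b : U X) : U X :=
  Node bool (fun t => if t then a else b).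
Definition using1 {X : Type} (a : U X) : U X := Node unit (fun _ => a).
Definition kpair {X : Type} (a b : U X) : U X :=
  upair (using1 a) (upair a b).

Definition is_group {G : Type} (mul : G -> G -> G) (one : G) (inv : G -> G) :=
  (forall a b c, mul a (mul b c) = mul (mul a b) c) /\
  (forall a, mul one a = a) /\ (forall a, mul a one = a) /\
  (forall a, mul (inv a) a = one) /\ (forall a, mul a (inv a) = one).

Definition is_action {G X : Type} (mul : G -> G -> G) (one : G)
  (act : G -> X -> X) :=
  (forall x, act one x = x) /\
  (forall g h x, act (mul g h) x = act g (act h x)).

Definition img {G X : Type} (act : G -> X -> X) (g : G) (a : X -> Prop) : X -> Prop :=
  fun y => exists x, a x /\ y = act g x.

Definition subs {X : Type} (a b : X -> Prop) := forall x, a x -> b x.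

Definition is_dyn_ideal {G X : Type} (act : G -> X -> X)
  (I : (X -> Prop) -> Prop) :=
  I (fun _ => False) /\
  (forall a b, I b -> subs a b -> I a) /\
  (forall a b, I a -> I b -> I (fun x => a x \/ b x)) /\
  (forall x0, I (fun x => x = x0)) /\
  (forall g a, I a -> I (img act g a)).

Fixpoint uact {G X : Type} (act : G -> X -> X) (g : G) (A : U X) : U X :=
  match A with
  | Atom x => Atom (act g x)
  | Node K f => Node K (fun i => uact act g (f i))
  end.

Definition pstab {G X : Type} (act : G -> X -> X) (b : X -> Prop) (g : G) :=
  forall x, b x -> act g x = x.

Definition symmetric {G X : Type} (act : G -> X -> X)
  (I : (X -> Prop) -> Prop) (A : U X) :=
  exists b, I b /\ forall g, pstab act b g -> ueq (uact act g A) A.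

(** membership in the permutation model W[[X]]: hereditarily symmetric *)
Fixpoint inW {G X : Type} (act : G -> X -> X) (I : (X -> Prop) -> Prop)
  (A : U X) : Prop :=
  symmetric act I A /\
  match A with
  | Atom _ => True
  | Node _ f => forall i, inW act I (f i)
  end.

Definition well_orders {X : Type} (R F : U X) : Prop :=
  let rel a b := umem (kpair a b) R in
  (forall p, umem p R -> exists a b, umem a F /\ umem b F /\ ueq p (kpair a b)) /\
  (forall a, umem a F -> ~ rel a a) /\
  (forall a b c, umem a F -> umem b F -> umem c F -> rel a b -> rel b c -> rel a c) /\
  (forall a b, umem a F -> umem b F -> ~ ueq a b -> rel a b \/ rel b a) /\
  (forall P : U X -> Prop, (exists a, P a /\ umem a F) ->
     exists m, P m /\ umem m F /\ forall a, P a -> umem a F -> ~ rel a m).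

Definition choice_fun {X : Type} (c F : U X) : Prop :=
  (forall p, umem p c -> exists B y, umem B F /\ umem y B /\ ueq p (kpair B y)) /\
  (forall B, umem B F -> exists y, umem (kpair B y) c) /\
  (forall B B' y y', umem (kpair B y) c -> umem (kpair B' y') c ->
     ueq B B' -> ueq y y').

Definition WO_choice {G X : Type} (act : G -> X -> X) (I : (X -> Prop) -> Prop) : Prop :=
  forall F : U X, inW act I F ->
    (exists R, inW act I R /\ well_orders R F) ->
    (forall B, umem B F -> exists y, umem y B) ->
    exists c, inW act I c /\ choice_fun c F.

Definition large {G X : Type} (act : G -> X -> X) (I : (X -> Prop) -> Prop)
  (a b : X -> Prop) : Prop :=
  forall c, I c -> exists g, pstab act a g /\ subs c (img act g b).

Definition cofinal_orbits {G X : Type} (act : G -> X -> X) (I : (X -> Prop) -> Prop) :=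
  forall a, I a -> exists b, I b /\ large act I a b.

Definition def_closed_set {G X : Type} (act : G -> X -> X) (a : X -> Prop) :=
  forall x, ~ a x -> exists g, pstab act a g /\ act g x <> x.

Definition def_closed {G X : Type} (act : G -> X -> X) (I : (X -> Prop) -> Prop) :=
  forall a, I a -> exists d, I d /\ subs a d /\ def_closed_set act d.

(* Main.v *)
Require Import Defs.
From Stdlib Require Import FunctionalExtensionality PropExtensionality ProofIrrelevance IndefiniteDescription Classical.

Lemma ueq_refl {X} (A : U X) : ueq A A.
Proof. induction A as [x|K f IH]; simpl; auto. split; intro i; exists i; apply IH. Qed.

Lemma ueq_sym {X} (A B : U X) : ueq A B -> ueq B A.
Proof.
  revert B; induction A as [x|K f IH]; intros [y|J g]; simpl; try tauto.
  - intros; congruence.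
  - intros [H1 H2]; split.
    + intro j; destruct (H2 j) as [i Hi]; exists i; apply IH; exact Hi.
    + intro i; destruct (H1 i) as [j Hj]; exists j; apply IH; exact Hj.
Qed.

Lemma ueq_trans {X} (A B C : U X) : ueq A B -> ueq B C -> ueq A C.
Proof.
  revert B C; induction A as [x|K f IH]; intros [y|J g] [z|L h]; simpl; try tauto.
  - intros; congruence.
  - intros [H1 H2] [G1 G2]; split.
    + intro i; destruct (H1 i) as [j Hj]; destruct (G1 j) as [k Hk]; exists k; eapply IH; eauto.
    + intro k; destruct (G2 k) as [j Hj]; destruct (H2 j) as [i Hi]; exists i; eapply IH; eauto.
Qed.

Lemma umem_ueq_l {X} (a a' A : U X) : ueq a a' -> umem a A -> umem a' A.
Proof.
  destruct A as [x|K f]; simpl; auto.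
  intros H [i Hi]; exists i; eapply ueq_trans; [apply ueq_sym; exact H| exact Hi].
Qed.

Lemma umem_ueq_r {X} (a A A' : U X) : ueq A A' -> umem a A -> umem a A'.
Proof.
  destruct A as [x|K f]; destruct A' as [y|J g]; simpl; try tauto.
  intros [H1 _] [i Hi]; destruct (H1 i) as [j Hj]; exists j; eapply ueq_trans; eauto.
Qed.

Lemma uact_mul {X G} {mul : G -> G -> G} {one : G} {act : G -> X -> X}
  (Hact : is_action mul one act) g h (A : U X) :
  uact act (mul g h) A = uact act g (uact act h A).
Proof.
  induction A as [x|K f IH]; simpl.
  - f_equal; apply (proj2 Hact).
  - f_equal; apply functional_extensionality; intro i; apply IH.
Qed.

Lemma uact_one {X G} {mul : G -> G -> G} {one : G} {act : G -> X -> X}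
  (Hact : is_action mul one act) (A : U X) : uact act one A = A.
Proof.
  induction A as [x|K f IH]; simpl.
  - f_equal; apply (proj1 Hact).
  - f_equal; apply functional_extensionality; intro i; apply IH.
Qed.

Lemma uact_ueq {X G} (act : G -> X -> X) g (A B : U X) :
  ueq A B -> ueq (uact act g A) (uact act g B).
Proof.
  revert B; induction A as [x|K f IH]; intros [y|J f']; simpl; try tauto.
  - intros ->; reflexivity.
  - intros [H1 H2]; split.
    + intro i; destruct (H1 i) as [j Hj]; exists j; apply IH; exact Hj.
    + intro j; destruct (H2 j) as [i Hi]; exists i; apply IH; exact Hi.
Qed.

Lemma umem_uact {X G} (act : G -> X -> X) g (a A : U X) :
  umem a A -> umem (uact act g a) (uact act g A).
Proof.
  destruct A as [x|K f]; simpl; auto.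
  intros [i Hi]; exists i; apply uact_ueq; exact Hi.
Qed.

Lemma uact_kpair {X G} (act : G -> X -> X) g (a b : U X) :
  uact act g (kpair a b) = kpair (uact act g a) (uact act g b).
Proof.
  unfold kpair, upair, using1; simpl; f_equal; apply functional_extensionality;
  intros [|]; simpl; [reflexivity|].
  f_equal; apply functional_extensionality; intros [|]; reflexivity.
Qed.

Lemma upair_cong {X} (a a' b b' : U X) :
  ueq a a' -> ueq b b' -> ueq (upair a b) (upair a' b').
Proof.
  intros Ha Hb; simpl; split; intros [|];
    [exists true|exists false|exists true|exists false]; assumption.
Qed.

Lemma using1_cong {X} (a a' : U X) : ueq a a' -> ueq (using1 a) (using1 a').
Proof. intros Ha; simpl; split; intros []; exists tt; exact Ha. Qed.

Lemma kpair_cong {X} (a a' b b' : U X) :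
  ueq a a' -> ueq b b' -> ueq (kpair a b) (kpair a' b').
Proof.
  intros; unfold kpair; apply upair_cong; [apply using1_cong| apply upair_cong]; auto.
Qed.

Lemma upair_inv {X} (a b c d : U X) : ueq (upair a b) (upair c d) ->
  (ueq a c \/ ueq a d) /\ (ueq b c \/ ueq b d) /\ (ueq a c \/ ueq b c) /\ (ueq a d \/ ueq b d).
Proof.
  simpl. intros [H1 H2].
  destruct (H1 true) as [[|] Ha]; destruct (H1 false) as [[|] Hb];
  destruct (H2 true) as [[|] Hc]; destruct (H2 false) as [[|] Hd]; tauto.
Qed.

Lemma using1_upair {X} (a c d : U X) : ueq (using1 a) (upair c d) -> ueq a c /\ ueq a d.
Proof.
  simpl. intros [_ H2]. destruct (H2 true) as [[] Hc]; destruct (H2 false) as [[] Hd]; tauto.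
Qed.

Lemma upair_using1 {X} (a b c : U X) : ueq (upair a b) (using1 c) -> ueq a c /\ ueq b c.
Proof.
  simpl. intros [H1 _]. destruct (H1 true) as [[] Hc]; destruct (H1 false) as [[] Hd]; tauto.
Qed.

Lemma using1_inv {X} (a c : U X) : ueq (using1 a) (using1 c) -> ueq a c.
Proof. simpl. intros [H1 _]. destruct (H1 tt) as [[] Hc]; exact Hc. Qed.

Lemma kpair_inj {X} (a b a' b' : U X) :
  ueq (kpair a b) (kpair a' b') -> ueq a a' /\ ueq b b'.
Proof.
  intro H; unfold kpair in H; destruct (upair_inv _ _ _ _ H) as [H1 [H2 [H3 H4]]].
  assert (Ha : ueq a a').
  { destruct H1 as [H1|H1]; [apply using1_inv in H1| apply using1_upair in H1; destruct H1]; auto. }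
  split; auto.
  assert (key : ueq b a' -> ueq b b').
  { intro Hb. destruct H4 as [H4|H4].
    - apply using1_upair in H4; destruct H4 as [_ Hab'].
      eapply ueq_trans; [exact Hb|]; eapply ueq_trans; [apply ueq_sym; exact Ha| exact Hab'].
    - destruct (upair_inv _ _ _ _ H4) as [_ [_ [_ [Hx|Hx]]]]; auto.
      eapply ueq_trans; [exact Hb|]; eapply ueq_trans; [apply ueq_sym; exact Ha| exact Hx]. }
  destruct H2 as [H2|H2].
  - apply upair_using1 in H2; destruct H2 as [_ Hb]; auto.
  - destruct (upair_inv _ _ _ _ H2) as [_ [[Hx|Hx] _]]; auto.
Qed.
Definition ufix {X G} (act : G -> X -> X) g (A : U X) := ueq (uact act g A) A.


Lemma grp_conj {G} {mul : G -> G -> G} {one inv} (HG : is_group mul one inv) g h :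
  mul g (mul (mul (inv g) h) g) = mul h g.
Proof.
  destruct HG as [Ha [Hl [Hr [Hil Hir]]]].
  rewrite Ha, Ha, Hir, Hl; reflexivity.
Qed.

Lemma act_inv_l {X G} {mul : G -> G -> G} {one inv} {act : G -> X -> X}
  (HG : is_group mul one inv) (Hact : is_action mul one act) g x :
  act (inv g) (act g x) = x.
Proof. rewrite <- (proj2 Hact), (proj1 (proj2 (proj2 (proj2 HG)))), (proj1 Hact); reflexivity. Qed.

Lemma act_inv_r {X G} {mul : G -> G -> G} {one inv} {act : G -> X -> X}
  (HG : is_group mul one inv) (Hact : is_action mul one act) g x :
  act g (act (inv g) x) = x.
Proof. rewrite <- (proj2 Hact), (proj2 (proj2 (proj2 (proj2 HG)))), (proj1 Hact); reflexivity. Qed.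

Lemma uact_inv_l {X G} {mul : G -> G -> G} {one inv} {act : G -> X -> X}
  (HG : is_group mul one inv) (Hact : is_action mul one act) g (A : U X) :
  uact act (inv g) (uact act g A) = A.
Proof. rewrite <- (uact_mul Hact), (proj1 (proj2 (proj2 (proj2 HG)))), (uact_one Hact); reflexivity. Qed.

Lemma uact_inv_r {X G} {mul : G -> G -> G} {one inv} {act : G -> X -> X}
  (HG : is_group mul one inv) (Hact : is_action mul one act) g (A : U X) :
  uact act g (uact act (inv g) A) = A.
Proof. rewrite <- (uact_mul Hact), (proj2 (proj2 (proj2 (proj2 HG)))), (uact_one Hact); reflexivity. Qed.

Lemma pstab_inv {X G} {mul : G -> G -> G} {one inv} {act : G -> X -> X}
  (HG : is_group mul one inv) (Hact : is_action mul one act) b g :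
  pstab act b g -> pstab act b (inv g).
Proof.
  intros H x Hx. rewrite <- (H x Hx) at 1. apply (act_inv_l HG Hact).
Qed.

Lemma pstab_mul {X G} {mul : G -> G -> G} {one} {act : G -> X -> X}
  (Hact : is_action mul one act) b g h :
  pstab act b g -> pstab act b h -> pstab act b (mul g h).
Proof. intros H1 H2 x Hx. rewrite (proj2 Hact), H2, H1; auto. Qed.

Lemma fix_inv {X G} {mul : G -> G -> G} {one inv} {act : G -> X -> X}
  (HG : is_group mul one inv) (Hact : is_action mul one act) g (A : U X) :
  ufix act g A -> ufix act (inv g) A.
Proof.
  unfold ufix; intro H.
  apply ueq_sym. rewrite <- (uact_inv_l HG Hact g A) at 1.
  apply uact_ueq. exact H.
Qed.

Lemma fix_uact {X G} {mul : G -> G -> G} {one inv} {act : G -> X -> X}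
  (HG : is_group mul one inv) (Hact : is_action mul one act) b (A : U X) g :
  (forall h, pstab act b h -> ufix act h A) ->
  forall h, pstab act (img act g b) h -> ufix act h (uact act g A).
Proof.
  intros HA h Hh.
  assert (Hp : pstab act b (mul (mul (inv g) h) g)).
  { intros x Hx. rewrite !(proj2 Hact).
    rewrite (Hh (act g x)) by (exists x; split; auto).
    apply (act_inv_l HG Hact). }
  unfold ufix. rewrite <- (uact_mul Hact), <- (grp_conj HG g h), (uact_mul Hact).
  apply uact_ueq. apply HA; exact Hp.
Qed.

Lemma sym_Node {X G} (act : G -> X -> X) (Id : (X -> Prop) -> Prop) K (B : K -> U X) s :
  Id s -> (forall h, pstab act s h -> forall k, ufix act h (B k)) ->
  symmetric act Id (Node K B).
Proof.
  intros Is H; exists s; split; auto; intros h Hh; simpl; split; intro k; exists k; apply H; auto.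
Qed.

Lemma sym2 {X G} (act : G -> X -> X) (Id : (X -> Prop) -> Prop) (HI : is_dyn_ideal act Id)
  (a b : U X) : symmetric act Id a -> symmetric act Id b ->
  exists s, Id s /\ forall h, pstab act s h -> ufix act h a /\ ufix act h b.
Proof.
  intros [s1 [I1 H1]] [s2 [I2 H2]].
  exists (fun x => s1 x \/ s2 x); split.
  - apply HI; auto.
  - intros h Hh; split; [apply H1|apply H2]; intros x Hx; apply Hh; auto.
Qed.

Lemma inW_Atom {X G} (act : G -> X -> X) (Id : (X -> Prop) -> Prop) (HI : is_dyn_ideal act Id) x :
  inW act Id (Atom x).
Proof.
  split; [|exact Logic.I].
  exists (fun y => y = x); split; [apply HI|]. intros h Hh; simpl; apply Hh; reflexivity.
Qed.

Lemma inW_upair {X G} (act : G -> X -> X) (Id : (X -> Prop) -> Prop) (HI : is_dyn_ideal act Id)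
  (a b : U X) : inW act Id a -> inW act Id b -> inW act Id (upair a b).
Proof.
  intros Ha Hb. split.
  - destruct (sym2 act Id HI a b) as [s [Is Hs]]; [destruct a; apply Ha| destruct b; apply Hb|].
    apply (sym_Node act Id bool _ s Is). intros h Hh [|]; apply Hs; auto.
  - intros [|]; auto.
Qed.

Lemma inW_using1 {X G} (act : G -> X -> X) (Id : (X -> Prop) -> Prop)
  (a : U X) : inW act Id a -> inW act Id (using1 a).
Proof.
  intros Ha. split.
  - assert (Hs : symmetric act Id a) by (destruct a; apply Ha).
    destruct Hs as [s [Is Hs]].
    apply (sym_Node act Id unit _ s Is). intros h Hh []; apply Hs; auto.
  - intros []; auto.
Qed.

Lemma inW_kpair {X G} (act : G -> X -> X) (Id : (X -> Prop) -> Prop) (HI : is_dyn_ideal act Id)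
  (a b : U X) : inW act Id a -> inW act Id b -> inW act Id (kpair a b).
Proof.
  intros Ha Hb. unfold kpair. apply inW_upair; auto.
  - apply inW_using1; auto.
  - apply inW_upair; auto.
Qed.

Lemma inW_sym {X G} (act : G -> X -> X) (Id : (X -> Prop) -> Prop) (A : U X) :
  inW act Id A -> symmetric act Id A.
Proof. destruct A; intro H; apply H. Qed.

Lemma inW_uact {X G} {mul : G -> G -> G} {one inv} {act : G -> X -> X}
  (HG : is_group mul one inv) (Hact : is_action mul one act)
  (Id : (X -> Prop) -> Prop) (HI : is_dyn_ideal act Id) g (A : U X) :
  inW act Id A -> inW act Id (uact act g A).
Proof.
  induction A as [x|K f IH].
  - intros _; apply inW_Atom; auto.
  - intros [[b [Ib Hb]] Hf]. split.
    + exists (img act g b); split.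
      * apply HI; auto.
      * apply (fix_uact HG Hact b (Node K f) g Hb).
    + intro i; apply IH; auto.
Qed.

Definition Rof {X K} (lt : K -> K -> Prop) (B : K -> U X) : U X :=
  Node {p : K * K | lt (fst p) (snd p)}
    (fun p => kpair (B (fst (proj1_sig p))) (B (snd (proj1_sig p)))).

Lemma inW_Rof {X G} (act : G -> X -> X) (Id : (X -> Prop) -> Prop) (HI : is_dyn_ideal act Id)
  K (lt : K -> K -> Prop) (B : K -> U X) s :
  (forall k, inW act Id (B k)) -> Id s ->
  (forall h, pstab act s h -> forall k, ufix act h (B k)) ->
  inW act Id (Rof lt B).
Proof.
  intros HB Is Hs. split.
  - apply (sym_Node act Id _ _ s Is). intros h Hh p.
    unfold ufix; rewrite uact_kpair; apply kpair_cong; apply Hs; auto.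
  - intro p; apply inW_kpair; auto.
Qed.

Lemma wo_Rof {X K} (lt : K -> K -> Prop) (B : K -> U X) :
  (forall k k', ueq (B k) (B k') -> k = k') -> (forall k, ~ lt k k) ->
  (forall a b c, lt a b -> lt b c -> lt a c) ->
  (forall k k', k = k' \/ lt k k' \/ lt k' k) ->
  (forall P : K -> Prop, (exists k, P k) -> exists m, P m /\ forall k, P k -> ~ lt k m) ->
  well_orders (Rof lt B) (Node K B).
Proof.
  intros Hinj Hirr Htr Htri Hmin.
  assert (Hrel : forall a b, umem (kpair a b) (Rof lt B) ->
            exists k1 k2, lt k1 k2 /\ ueq a (B k1) /\ ueq b (B k2)).
  { intros a b [[[k1 k2] Hl] Hp]. simpl in Hp. apply kpair_inj in Hp.
    exists k1, k2; simpl in Hl; tauto. }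
  assert (Hrel' : forall a b k1 k2, lt k1 k2 -> ueq a (B k1) -> ueq b (B k2) ->
            umem (kpair a b) (Rof lt B)).
  { intros a b k1 k2 Hl H1 H2. exists (exist _ (k1, k2) Hl). simpl. apply kpair_cong; auto. }
  split; [|split; [|split; [|split]]]; cbv beta.
  - intros p [[[k1 k2] Hl] Hp]. exists (B k1), (B k2).
    split; [exists k1; apply ueq_refl|]. split; [exists k2; apply ueq_refl| exact Hp].
  - intros a [k Hk] Ha. destruct (Hrel a a Ha) as [k1 [k2 [Hl [H1 H2]]]].
    assert (k1 = k2) by (apply Hinj; eapply ueq_trans; [apply ueq_sym; exact H1| exact H2]).
    subst; eapply Hirr; eauto.
  - intros a b c _ _ _ Hab Hbc.
    destruct (Hrel _ _ Hab) as [k1 [k2 [L1 [A1 B2]]]].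
    destruct (Hrel _ _ Hbc) as [k3 [k4 [L2 [B3 C4]]]].
    assert (k2 = k3) by (apply Hinj; eapply ueq_trans; [apply ueq_sym; exact B2| exact B3]).
    subst. exact (Hrel' a c k1 k4 (Htr _ _ _ L1 L2) A1 C4).
  - intros a b [k Ha] [k' Hb] Hn. destruct (Htri k k') as [E|[L|L]].
    + subst; exfalso; apply Hn; eapply ueq_trans; [exact Ha| apply ueq_sym; exact Hb].
    + left; eapply Hrel'; eauto.
    + right; eapply Hrel'; eauto.
  - intros P [a [Pa [k Hk]]].
    destruct (Hmin (fun k => exists a, P a /\ ueq a (B k))) as [mk [[am [Pam Ham]] Hmk]].
    { exists k, a; auto. }
    exists am. split; auto. split; [exists mk; auto|].
    intros a' Pa' [k' Hk'] Hr. destruct (Hrel _ _ Hr) as [k1 [k2 [L [A1 A2]]]].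
    assert (k1 = k') by (apply Hinj; eapply ueq_trans; [apply ueq_sym; exact A1| exact Hk']).
    assert (k2 = mk) by (apply Hinj; eapply ueq_trans; [apply ueq_sym; exact A2| exact Ham]).
    subst. apply (Hmk k'); [exists a'; auto| auto].
Qed.
Lemma rigid {X G} {mul : G -> G -> G} {one inv} {act : G -> X -> X}
  (HG : is_group mul one inv) (Hact : is_action mul one act)
  (S : G -> Prop) (F R : U X) :
  well_orders R F -> (forall h, S h -> S (inv h)) ->
  (forall h, S h -> ufix act h F /\ ufix act h R) ->
  forall B, umem B F -> forall h, S h -> ufix act h B.
Proof.
  intros [Hw1 [Hirr [Htr [Htri Hmin]]]] HSi HSF. cbv beta in *.
  apply NNPP; intro Hc.
  destruct (Hmin (fun B => exists h, S h /\ ~ ufix act h B)) as [m [[h [Sh Hnf]] [Fm Hm]]].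
  { destruct (not_all_ex_not _ _ Hc) as [B HB]. apply imply_to_and in HB.
    destruct HB as [FB HB]. destruct (not_all_ex_not _ _ HB) as [h Hh].
    apply imply_to_and in Hh. exists B; split; [exists h; tauto| auto]. }
  assert (Hnp : forall a, umem a F -> umem (kpair a m) R -> forall h', S h' -> ufix act h' a).
  { intros a Fa Ra h' Sh'. apply NNPP; intro Hn. apply (Hm a); [exists h'; auto| auto| auto]. }
  assert (memF : forall h a, S h -> umem a F -> umem (uact act h a) F).
  { intros h' a Sh' Fa. eapply umem_ueq_r; [apply (HSF h' Sh')| apply umem_uact; exact Fa]. }
  assert (memR : forall h a b, S h -> umem (kpair a b) R ->
            umem (kpair (uact act h a) (uact act h b)) R).
  { intros h' a b Sh' Rab. rewrite <- uact_kpair.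
    eapply umem_ueq_r; [apply (HSF h' Sh')| apply umem_uact; exact Rab]. }
  assert (relcong : forall a b a' b', umem (kpair a b) R -> ueq a a' -> ueq b b' ->
            umem (kpair a' b') R).
  { intros a b a' b' H1 H2 H3. eapply umem_ueq_l; [apply kpair_cong; eauto| exact H1]. }
  assert (Fm' : umem (uact act h m) F) by (apply memF; auto).
  destruct (Htri _ _ Fm' Fm Hnf) as [H|H].
  - assert (Hfix := Hnp _ Fm' H h Sh).
    apply (Hirr _ Fm').
    apply (relcong _ _ _ _ (memR h _ _ Sh H)); [exact Hfix| apply ueq_refl].
  - assert (H2 := memR (inv h) _ _ (HSi h Sh) H).
    rewrite (uact_inv_l HG Hact) in H2.
    assert (Fm'' := memF (inv h) m (HSi h Sh) Fm).
    assert (Hfix := Hnp _ Fm'' H2 h Sh).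
    unfold ufix in Hfix. rewrite (uact_inv_r HG Hact) in Hfix.
    apply (Hirr _ Fm).
    apply (relcong _ _ _ _ H2); [apply ueq_sym; exact Hfix| apply ueq_refl].
Qed.

Lemma part1 {X G} {mul : G -> G -> G} {one inv} {act : G -> X -> X}
  (Id : (X -> Prop) -> Prop)
  (HG : is_group mul one inv) (Hact : is_action mul one act) (HI : is_dyn_ideal act Id) :
  cofinal_orbits act Id -> WO_choice act Id.
Proof.
  intros Hcof F HF [R [HR Hwo]] Hne.
  assert (HFs := inW_sym act Id F HF). assert (HRs := inW_sym act Id R HR).
  destruct HFs as [b1 [Ib1 Hb1]]. destruct HRs as [b2 [Ib2 Hb2]].
  pose (a0 := fun x => b1 x \/ b2 x).
  assert (Ia0 : Id a0) by (apply HI; auto).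
  destruct (Hcof a0 Ia0) as [b [Ib Hlg]].
  assert (Hrig : forall B, umem B F -> forall h, pstab act a0 h -> ufix act h B).
  { intros B HB h Hh. apply (rigid HG Hact (pstab act a0) F R Hwo); auto.
    - intros; apply (pstab_inv HG Hact); auto.
    - intros h' Hh'; split; [apply Hb1| apply Hb2]; intros x Hx; apply Hh'; unfold a0; auto. }
  destruct F as [x|K f].
  - exists (Node False (fun e => match e with end)). split.
    + split; [|intros []]. exists (fun _ => False); split; [apply HI|].
      intros h _; simpl; split; intros [].
    + split; [intros p [[] _]| split; [intros B []| intros B B' y y' [[] _]]].
  - destruct HF as [_ HFm].
    pose (good := fun k z => inW act Id z /\ umem z (f k) /\ forall h, pstab act b h -> ufix act h z).
    assert (Hgood : forall k, exists z, good k z).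
    { intro k. destruct (Hne (f k) (ex_intro _ k (ueq_refl _))) as [y Hy].
      pose proof (HFm k) as Hfk.
      pose proof (Hrig (f k) (ex_intro _ k (ueq_refl _))) as Hrk.
      unfold good. destruct (f k) as [x|J e] eqn:E; [simpl in Hy; contradiction|].
      destruct Hy as [j Hj]. destruct Hfk as [_ He].
      destruct (inW_sym act Id _ (He j)) as [c0 [Ic0 Hc0]].
      destruct (Hlg c0 Ic0) as [g [Hg Hsub]].
      assert (Hgi : pstab act a0 (inv g)) by (apply (pstab_inv HG Hact); auto).
      assert (Hm : umem (uact act (inv g) (e j)) (Node J e)).
      { eapply umem_ueq_r; [apply (Hrk _ Hgi)|]. apply umem_uact. exists j; apply ueq_refl. }
      destruct Hm as [j' Hj'].
      exists (e j'). split; [apply He|]. split; [exists j'; apply ueq_refl|].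
      intros h Hh.
      assert (Hf : ufix act h (uact act (inv g) (e j))).
      { apply (fix_uact HG Hact c0 (e j) (inv g) Hc0 h).
        intros x [x1 [Hx1 Ex]]; subst x. destruct (Hsub x1 Hx1) as [x2 [Hx2 Ex]]; subst x1.
        rewrite (act_inv_l HG Hact). apply Hh; auto. }
      unfold ufix in *.
      eapply ueq_trans; [apply uact_ueq; apply ueq_sym; exact Hj'|].
      eapply ueq_trans; [exact Hf| exact Hj']. }
    pose (Cl := fun k => fun j => ueq (f j) (f k)).
    pose (Rl := fun (C : K -> Prop) (z : U X) => forall k, C = Cl k -> good k z).
    destruct (functional_choice Rl) as [Y HY].
    { intro C. destruct (classic (exists k, C = Cl k)) as [[k Hk]|Hn].
      - destruct (Hgood k) as [z Hz]. exists z. intros k' Hk'.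
        assert (Hkk : ueq (f k) (f k')).
        { assert (E := f_equal (fun P => P k') (eq_trans (eq_sym Hk) Hk')).
          unfold Cl in E; simpl in E. apply ueq_sym. rewrite E. apply ueq_refl. }
        destruct Hz as [Hz1 [Hz2 Hz3]]. split; [auto| split; [|auto]].
        eapply umem_ueq_r; [exact Hkk| exact Hz2].
      - exists (Node False (fun e => match e with end)). intros k Hk; exfalso; apply Hn; eauto. }
    assert (Hy : forall k, good k (Y (Cl k))) by (intro k; apply (HY (Cl k) k eq_refl)).
    assert (Hyeq : forall k k', ueq (f k) (f k') -> Y (Cl k) = Y (Cl k')).
    { intros k k' Hkk. f_equal. unfold Cl. apply functional_extensionality; intro j.
      apply propositional_extensionality; split; intro H.
      - eapply ueq_trans; eauto.
      - eapply ueq_trans; [exact H| apply ueq_sym; exact Hkk]. }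
    exists (Node K (fun k => kpair (f k) (Y (Cl k)))). split.
    + split.
      * apply (sym_Node act Id K _ (fun x => a0 x \/ b x)); [apply HI; auto|].
        intros h Hh k. unfold ufix; rewrite uact_kpair; apply kpair_cong.
        -- apply Hrig; [exists k; apply ueq_refl|]. intros x Hx; apply Hh; auto.
        -- apply (Hy k). intros x Hx; apply Hh; auto.
      * intro k. apply inW_kpair; auto. apply (Hy k).
    + split; [|split].
      * intros p [k Hk]. exists (f k), (Y (Cl k)).
        split; [exists k; apply ueq_refl| split; [apply (Hy k)| exact Hk]].
      * intros B [k Hk]. exists (Y (Cl k)). exists k. apply kpair_cong; [exact Hk| apply ueq_refl].
      * intros B B' z z' [k Hk] [k' Hk'] HB.
        apply kpair_inj in Hk. apply kpair_inj in Hk'.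
        destruct Hk as [Hk1 Hk2]; destruct Hk' as [Hk1' Hk2'].
        assert (Hkk : ueq (f k) (f k')).
        { eapply ueq_trans; [apply ueq_sym; exact Hk1|].
          eapply ueq_trans; [exact HB| exact Hk1']. }
        rewrite (Hyeq k k' Hkk) in Hk2.
        eapply ueq_trans; [exact Hk2| apply ueq_sym; exact Hk2'].
Qed.
Definition WOrel {T} (lt : T -> T -> Prop) :=
  (forall x, ~ lt x x) /\ (forall x y z, lt x y -> lt y z -> lt x z) /\
  (forall x y, x = y \/ lt x y \/ lt y x) /\
  (forall P : T -> Prop, (exists x, P x) -> exists m, P m /\ forall x, P x -> ~ lt x m).

Definition Fc {X} (c : X -> Prop) : U X := Node {x | c x} (fun x => Atom (proj1_sig x)).
Definition Rc {X} (ltX : X -> X -> Prop) (c : X -> Prop) : U X :=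
  Rof (fun x y : {x | c x} => ltX (proj1_sig x) (proj1_sig y)) (fun x => Atom (proj1_sig x)).
Definition Tc {X} ltX (c : X -> Prop) : U X := kpair (Fc c) (Rc ltX c).
Definition Bo {X G} (act : G -> X -> X) (a : X -> Prop) ltX (c : X -> Prop) : U X :=
  Node {g : G | pstab act a g} (fun g => uact act (proj1_sig g) (Tc ltX c)).

Lemma wo_Fc {X} (ltX : X -> X -> Prop) (c : X -> Prop) :
  WOrel ltX -> well_orders (Rc ltX c) (Fc c).
Proof.
  intros [Xirr [Xtr [Xtri Xmin]]]. apply wo_Rof.
  - intros [x hx] [y hy] H; simpl in H; subst; f_equal; apply proof_irrelevance.
  - intros k; apply Xirr.
  - intros a b d; apply Xtr.
  - intros [x hx] [y hy]; simpl. destruct (Xtri x y) as [E|E]; [left|right; exact E].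
    subst; f_equal; apply proof_irrelevance.
  - intros P [[x hx] Px].
    destruct (Xmin (fun x => exists h : c x, P (exist _ x h))) as [m [[hm Pm] Hm]].
    { exists x, hx; exact Px. }
    exists (exist _ m hm); split; auto.
    intros [k hk] Pk Lk. apply (Hm k); [exists hk; auto| exact Lk].
Qed.

Lemma inW_Tc {X G} (act : G -> X -> X) (Id : (X -> Prop) -> Prop) (HI : is_dyn_ideal act Id)
  ltX (c : X -> Prop) : Id c -> inW act Id (Tc ltX c).
Proof.
  intro Ic. unfold Tc. apply inW_kpair; auto.
  - split.
    + apply (sym_Node act Id _ _ c Ic). intros h Hh [x hx]; simpl. apply Hh; auto.
    + intro k; apply inW_Atom; auto.
  - apply (inW_Rof act Id HI _ _ _ c); auto.
    + intro k; apply inW_Atom; auto.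
    + intros h Hh [x hx]; simpl. apply Hh; auto.
Qed.

Lemma fix_Bo {X G} {mul : G -> G -> G} {one inv} {act : G -> X -> X}
  (HG : is_group mul one inv) (Hact : is_action mul one act) a ltX c h :
  pstab act a h -> ufix act h (Bo act a ltX c).
Proof.
  intro Hh. unfold ufix, Bo; cbn [uact ueq]. split.
  - intros [g Hg]. exists (exist _ (mul h g) (pstab_mul Hact a h g Hh Hg)); cbn [proj1_sig].
    rewrite (uact_mul Hact); apply ueq_refl.
  - intros [g Hg].
    exists (exist _ (mul (inv h) g) (pstab_mul Hact a _ g (pstab_inv HG Hact a h Hh) Hg)); cbn [proj1_sig].
    rewrite <- (uact_mul Hact).
    destruct HG as [Ha [Hl [Hr [Hil Hir]]]]. rewrite Ha, Hir, Hl. apply ueq_refl.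
Qed.

Lemma inW_Bo {X G} {mul : G -> G -> G} {one inv} {act : G -> X -> X}
  (HG : is_group mul one inv) (Hact : is_action mul one act)
  (Id : (X -> Prop) -> Prop) (HI : is_dyn_ideal act Id) a ltX c :
  Id a -> Id c -> inW act Id (Bo act a ltX c).
Proof.
  intros Ia Ic. split.
  - exists a; split; auto. intros h Hh; apply (fix_Bo HG Hact); auto.
  - intros [g Hg]; cbn [proj1_sig]. apply (inW_uact HG Hact Id HI). apply inW_Tc; auto.
Qed.

Lemma part2 {X G} {mul : G -> G -> G} {one inv} {act : G -> X -> X}
  (Id : (X -> Prop) -> Prop)
  (HG : is_group mul one inv) (Hact : is_action mul one act) (HI : is_dyn_ideal act Id)
  (ltX : X -> X -> Prop) (HX : WOrel ltX)
  (ltS : (X -> Prop) -> (X -> Prop) -> Prop) (HS : WOrel ltS) :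
  def_closed act Id -> WO_choice act Id -> cofinal_orbits act Id.
Proof.
  intros Hdc Hwo a Ia.
  destruct HS as [Sirr [Str [Stri Smin]]].
  pose (canon := fun c => Id c /\ forall d, ltS d c -> Id d ->
                    ~ ueq (Bo act a ltX d) (Bo act a ltX c)).
  pose (K := {c | canon c}).
  pose (FF := Node K (fun k => Bo act a ltX (proj1_sig k))).
  pose (RR := Rof (fun k k' : K => ltS (proj1_sig k) (proj1_sig k'))
                  (fun k : K => Bo act a ltX (proj1_sig k))).
  assert (Hrep : forall c, Id c -> exists k : K, ueq (Bo act a ltX (proj1_sig k)) (Bo act a ltX c)).
  { intros c Ic.
    destruct (Smin (fun d => Id d /\ ueq (Bo act a ltX d) (Bo act a ltX c))) as [m [[Im Hm] Hmin]].
    { exists c; split; [auto| apply ueq_refl]. }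
    assert (Cm : canon m).
    { split; auto. intros d Hd Idd He. apply (Hmin d); [|exact Hd].
      split; auto. eapply ueq_trans; eauto. }
    exists (exist _ m Cm); simpl; exact Hm. }
  assert (HwoFF : well_orders RR FF).
  { apply wo_Rof.
    - intros [k hk] [k' hk'] H; simpl in H. destruct (Stri k k') as [E|[L|L]].
      + subst; f_equal; apply proof_irrelevance.
      + exfalso; apply (proj2 hk' k L (proj1 hk)); exact H.
      + exfalso; apply (proj2 hk k' L (proj1 hk')); apply ueq_sym; exact H.
    - intro k; apply Sirr.
    - intros x y z; apply Str.
    - intros [k hk] [k' hk']; simpl. destruct (Stri k k') as [E|E]; [left|right; exact E].
      subst; f_equal; apply proof_irrelevance.
    - intros P [[x hx] Px].
      destruct (Smin (fun x => exists h : canon x, P (exist _ x h))) as [m [[hm Pm] Hm]].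
      { exists x, hx; exact Px. }
      exists (exist _ m hm); split; auto.
      intros [k hk] Pk Lk. apply (Hm k); [exists hk; auto| exact Lk]. }
  assert (HinFF : inW act Id FF).
  { split.
    - apply (sym_Node act Id _ _ a Ia). intros h Hh k; apply (fix_Bo HG Hact); auto.
    - intros [k hk]; cbn [proj1_sig]. apply (inW_Bo HG Hact Id HI); auto. apply hk. }
  assert (HinRR : inW act Id RR).
  { apply (inW_Rof act Id HI _ _ _ a); auto.
    - intros [k hk]; cbn [proj1_sig]. apply (inW_Bo HG Hact Id HI); auto. apply hk.
    - intros h Hh k; apply (fix_Bo HG Hact); auto. }
  assert (Hne : forall B, umem B FF -> exists y, umem y B).
  { intros B [k Hk]. exists (uact act one (Tc ltX (proj1_sig k))).
    eapply umem_ueq_r; [apply ueq_sym; exact Hk|].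
    assert (Hp1 : pstab act a one) by (intros x _; apply (proj1 Hact)).
    exists (exist _ one Hp1); cbn [proj1_sig]; apply ueq_refl. }
  destruct (Hwo FF HinFF (ex_intro _ RR (conj HinRR HwoFF)) Hne) as [ch [Hch [Hc1 [Hc2 Hc3]]]].
  destruct (inW_sym act Id _ Hch) as [s [Is Hs]].
  destruct (Hdc (fun x => s x \/ a x)) as [d [Idd [Hsd Hdcl]]]; [apply HI; auto|].
  exists d; split; auto. intros c0 Ic0.
  destruct (Hrep c0 Ic0) as [k Hk].
  assert (Hk' : umem (Bo act a ltX (proj1_sig k)) FF) by (exists k; apply ueq_refl).
  destruct (Hc2 _ Hk') as [y Hy].
  destruct (Hc1 _ Hy) as [B [y' [HB [Hy' Hp]]]].
  apply kpair_inj in Hp; destruct Hp as [E1 E2].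
  assert (Hyc : umem y (Bo act a ltX c0)).
  { eapply umem_ueq_r; [|eapply umem_ueq_l; [apply ueq_sym; exact E2| exact Hy']].
    eapply ueq_trans; [apply ueq_sym; exact E1| exact Hk]. }
  destruct Hyc as [[g Hg] Hyg]. cbn [proj1_sig] in Hyg.
  assert (Hpa : forall h, pstab act d h -> pstab act a h).
  { intros h Hh x Hx; apply Hh, Hsd; auto. }
  assert (Hfy : forall h, pstab act d h -> ufix act h y).
  { intros h Hh.
    assert (Hs' : pstab act s h) by (intros x Hx; apply Hh, Hsd; auto).
    assert (H1 := umem_uact act h _ _ Hy). rewrite uact_kpair in H1.
    apply (umem_ueq_r _ _ _ (Hs h Hs')) in H1.
    apply (Hc3 _ _ _ _ H1 Hy). apply (fix_Bo HG Hact); auto. }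
  assert (HfT : forall h, pstab act d h -> ufix act (mul (mul (inv g) h) g) (Tc ltX c0)).
  { intros h Hh. unfold ufix. rewrite !(uact_mul Hact).
    rewrite <- (uact_inv_l HG Hact g (Tc ltX c0)) at 2.
    apply uact_ueq.
    eapply ueq_trans; [apply uact_ueq; apply ueq_sym; exact Hyg|].
    eapply ueq_trans; [apply Hfy; exact Hh| exact Hyg]. }
  assert (Hatoms : forall x, c0 x -> forall h, pstab act d h -> act h (act g x) = act g x).
  { intros x Hx h Hh.
    pose (h' := mul (mul (inv g) h) g).
    pose (S := fun h => ufix act h (Fc c0) /\ ufix act h (Rc ltX c0)).
    assert (HS' : S h').
    { assert (H := HfT h Hh). unfold ufix, Tc in H. rewrite uact_kpair in H.
      apply kpair_inj in H. exact H. }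
    assert (Hr := rigid HG Hact S (Fc c0) (Rc ltX c0) (wo_Fc ltX c0 HX)).
    assert (Hx' : ufix act h' (Atom x)).
    { apply Hr; auto.
      - intros h0 [H1 H2]; split; apply (fix_inv HG Hact); auto.
      - exists (exist _ x Hx); apply ueq_refl. }
    assert (E : act (mul (mul (inv g) h) g) x = x) by exact Hx'.
    rewrite !(proj2 Hact) in E.
    rewrite <- (act_inv_r HG Hact g (act h (act g x))), E. reflexivity. }
  exists (inv g). split; [apply (pstab_inv HG Hact); auto|].
  intros x Hx. exists (act g x). split.
  - apply NNPP; intro Hn. destruct (Hdcl _ Hn) as [h [Hh Hne']]. apply Hne', Hatoms; auto.
  - rewrite (act_inv_l HG Hact). reflexivity.
Qed.

From mathcomp Require Import ssreflect ssrfun ssrbool eqtype boolp wochoice.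

Lemma wo_exists (T : Type) : exists lt : T -> T -> Prop,
  (forall x, ~ lt x x) /\ (forall x y z, lt x y -> lt y z -> lt x z) /\
  (forall x y, x = y \/ lt x y \/ lt y x) /\
  (forall P : T -> Prop, (exists x, P x) -> exists m, P m /\ forall x, P x -> ~ lt x m).
Proof.
have [R wo] := well_ordering_principle {classic T}.
have mn : forall A : pred {classic T}, (exists x, A x) ->
   exists m, A m /\ forall y, A y -> R m y.
  move=> A [x Ax]; have [|m [[Am lb] _]] := wo A; first by exists x.
  by exists m; split => // y Ay; apply: lb.
have refl : forall x, R x x.
  move=> x; have [|m [Am lb]] := mn (fun z => z == x); first by exists x.
  by move: Am => /= /eqP Em; subst m; apply: lb => /=.
have anti : forall x y, R x y -> R y x -> x = y.
  move=> x y Rxy Ryx.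
  have [|m [[Am lb] uq]] := wo (fun z => (z == x) || (z == y)); first by exists x; rewrite /in_mem /= eqxx.
  have ex : m = x.
    apply: uq; split; first by rewrite /in_mem /= eqxx.
    by move=> w; rewrite /in_mem /= => /orP[/eqP->|/eqP->].
  have ey : m = y.
    apply: uq; split; first by rewrite /in_mem /= eqxx orbT.
    by move=> w; rewrite /in_mem /= => /orP[/eqP->|/eqP->].
  by rewrite -ex -ey.
have tot : forall x y, R x y \/ R y x.
  move=> x y; have [|m [Am lb]] := mn (fun z => (z == x) || (z == y)); first by exists x; rewrite eqxx.
  move: Am => /= /orP[] /eqP Em; subst m; [left|right]; apply: lb; by rewrite /= eqxx ?orbT.
have trans : forall x y z, R x y -> R y z -> R x z.
  move=> x y z Rxy Ryz.
  have [|m [Am lb]] := mn (fun w => [|| w == x, w == y | w == z]); first by exists x; rewrite eqxx.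
  move: Am => /= /or3P[] /eqP Em; subst m.
  - by apply: lb; rewrite eqxx !orbT.
  - have Ryx : R y x by apply: lb; rewrite eqxx.
    by rewrite (anti _ _ Rxy Ryx).
  - have Rzy : R z y by apply: lb; rewrite eqxx !orbT.
    by rewrite -(anti _ _ Ryz Rzy).
exists (fun x y => R x y /\ x <> y); split; first by move=> x [_ H].
split.
  move=> x y z [Rxy nxy] [Ryz nyz]; split; first exact: trans Rxy Ryz.
  move=> exz; subst z; by apply: nxy; apply: anti.
split.
  move=> x y; case: (pselect (x = y)) => [->|nxy]; first by left.
  right; case: (tot x y) => H; [left|right]; split => //; by move=> e; apply: nxy.
move=> P [x Px].
have [|m [Am lb]] := mn (fun z => `[< P z >]); first by exists x; apply/asboolP.
exists m; split; first by apply/asboolP.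
move=> y Py [Rym nym]; apply: nym; apply: anti => //; apply: lb; exact/asboolP.
Qed.

Theorem mainTheorem4 (X G : Type) (mul : G -> G -> G) (one : G) (inv : G -> G)
  (act : G -> X -> X) (I : (X -> Prop) -> Prop)
  (HG : is_group mul one inv) (Hact : is_action mul one act)
  (HI : is_dyn_ideal act I) :
  (cofinal_orbits act I -> WO_choice act I) /\
  (def_closed act I -> WO_choice act I -> cofinal_orbits act I).
Proof.
  split; first exact: (part1 I HG Hact HI).
  move=> Hdc Hwo.
  have [ltX HX] := wo_exists X.
  have [ltS HS] := wo_exists (X -> Prop).
  exact: (part2 I HG Hact HI ltX HX ltS HS Hdc Hwo).
Qed.
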